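(* Fix $t\ge1$. Let $\widehat g_{t-1}$, $b_t$, $r_t$ be random vectors in $\mathbb{R}^d$, $B_t$ a random $d\times d$ matrix, $\eta_{t-1}>0$ and $\lambda_t>0$, with finite second moments as needed. Define $u_{t-1}=\widehat g_{t-1}/\|\widehat g_{t-1}\|_2$ if $\widehat g_{t-1}\ne0$ and $u_{t-1}=0$ otherwise, and $P^\perp_{t-1}=I-u_{t-1}u_{t-1}^\top$. Assume \[ b_t=\eta_{t-1}B_t\widehat g_{t-1}+r_t \] and \[ \widehat g_{t-1}^\top B_t\widehat g_{t-1}\ge\lambda_t\|\widehat g_{t-1}\|_2^2\quad\text{almost surely}. \] Let $b_t^\perp=P^\perp_{t-1}b_t$. Then \[ \mathbb{E}\|b_t^\perp\|_2^2\le\mathbb{E}\|b_t\|_2^2-\eta_{t-1}^2\lambda_t^2\,\mathbb{E}\|\widehat g_{t-1}\|_2^2+2\eta_{t-1}\lambda_t\,\mathbb{E}\big[\|\widehat g_{t-1}\|_2\|r_t\|_2\big]. \] In particular, if $\mathbb{E}\|r_t\|_2^2\le\epsilon_t^2$ for some $\epsilon_t\ge0$, then \[ \mathbb{E}\|b_t^\perp\|_2^2\le\mathbb{E}\|b_t\|_2^2-\eta_{t-1}^2\lambda_t^2\,\mathbb{E}\|\widehat g_{t-1}\|_2^2+2\eta_{t-1}\lambda_t\,\epsilon_t\sqrt{\mathbb{E}\|\widehat g_{t-1}\|_2^2}. \]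
   Context: Interpretation: $\widehat g_{t-1}$ is the previous stochastic gradient in an asynchronous stochastic gradient iteration, $b_t$ is the staleness-induced bias of the current gradient (linearized with operator $B_t$, stepsize $\eta_{t-1}$, and remainder $r_t$), and $b_t^\perp$ is the bias after projecting out the previous-gradient direction. *)

(* Defs.v *)
From HB Require Import structures.
From mathcomp Require Import all_boot all_order all_algebra.
From mathcomp Require Import all_classical all_reals all_analysis.
Set Implicit Arguments. Unset Strict Implicit. Unset Printing Implicit Defensive.
Import Order.TTheory GRing.Theory Num.Theory.
Local Open Scope ring_scope.

Definition sqnorm (R : realType) (n : nat) (v : 'cV[R]_n) : R :=
  \sum_(i < n) v i 0 ^+ 2.

Definition norm2 (R : realType) (n : nat) (v : 'cV[R]_n) : R :=
  Num.sqrt (sqnorm v).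

Definition quadf (R : realType) (n : nat) (A : 'M[R]_n) (v : 'cV[R]_n) : R :=
  (v^T *m A *m v) 0 0.

Definition unitdir (R : realType) (n : nat) (v : 'cV[R]_n) : 'cV[R]_n :=
  if v == 0 then 0 else (norm2 v)^-1 *: v.

Definition Pperp (R : realType) (n : nat) (v : 'cV[R]_n) : 'M[R]_n :=
  1%:M - unitdir v *m (unitdir v)^T.

Definition Esp (R : realType) (d : measure_display) (T : measurableType d)
  (P : probability T R) (f : T -> R) : \bar R :=
  (\int[P]_x (f x)%:E)%E.

(* Main.v *)
Require Import Defs.
From HB Require Import structures.
From mathcomp Require Import all_boot all_order all_algebra.
From mathcomp Require Import all_classical all_reals all_analysis.
From mathcomp Require Import ring lra.
Import Order.TTheory GRing.Theory Num.Theory.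
Import numFieldNormedType.Exports.
Local Open Scope ring_scope.
Local Open Scope classical_set_scope.
Lemma measurable_invR (R : realType) : measurable_fun [set: R] (@GRing.inv R).
Proof.
have -> : [set: R] = [set (0:R)] `|` ~` [set 0].
  by rewrite setUCr.
have oC : open (~` [set (0:R)]).
  by apply: closed_openC; apply: accessible_closed_set1; apply: hausdorff_accessible; exact: Rhausdorff.
apply/measurable_funU => //.
  by apply: measurable_realfun.open_measurable.
split; first exact: measurable_fun_set1.
apply: measurable_realfun.open_continuous_measurable_fun => // x; rewrite inE => /eqP x0.
exact: inv_continuous.
Qed.

Lemma measurable_sqrtR (R : realType) : measurable_fun [set: R] (@Num.sqrt R).
Proof. exact: measurable_realfun.continuous_measurable_fun (@sqrt_continuous R). Qed.

Local Close Scope classical_set_scope.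
Section Alg.
Variables (R : realType) (n : nat).
Implicit Types (u v w g : 'cV[R]_n).

Definition dot u v : R := \sum_(i < n) u i 0 * v i 0.

Lemma sqnorm_dot v : sqnorm v = dot v v.
Proof. by apply: eq_bigr => i _; rewrite expr2. Qed.

Lemma sqnorm_ge0 v : 0 <= sqnorm v.
Proof. by apply: sumr_ge0 => i _; rewrite sqr_ge0. Qed.

Lemma sqnorm_eq0 v : sqnorm v = 0 -> v = 0.
Proof.
move=> /eqP; rewrite psumr_eq0; last by move=> i _; rewrite sqr_ge0.
move=> /allP H; apply/matrixP => i j; rewrite (ord1 j) mxE.
have := H i (mem_index_enum _); rewrite implyTb sqrf_eq0 => /eqP ->. done.
Qed.

Lemma norm2_sqr v : norm2 v ^+ 2 = sqnorm v.
Proof. by rewrite /norm2 sqr_sqrtr // sqnorm_ge0. Qed.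

Lemma norm2_ge0 v : 0 <= norm2 v.
Proof. exact: sqrtr_ge0. Qed.

Lemma dotC u v : dot u v = dot v u.
Proof. by apply: eq_bigr => i _; rewrite mulrC. Qed.

Lemma dotDr u v w : dot u (v + w) = dot u v + dot u w.
Proof. by rewrite /dot -big_split; apply: eq_bigr => i _; rewrite mxE mulrDr. Qed.

Lemma dotZr u v c : dot u (c *: v) = c * dot u v.
Proof. by rewrite /dot mulr_sumr; apply: eq_bigr => i _; rewrite mxE mulrCA. Qed.

Lemma dotZl u v c : dot (c *: u) v = c * dot u v.
Proof. by rewrite /dot mulr_sumr; apply: eq_bigr => i _; rewrite mxE mulrA. Qed.

Lemma dot0l v : dot 0 v = 0.
Proof. by rewrite /dot big1 // => i _; rewrite mxE mul0r. Qed.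

Lemma dot0r v : dot v 0 = 0.
Proof. by rewrite dotC dot0l. Qed.

Lemma quadfE (A : 'M[R]_n) v : quadf A v = dot v (A *m v).
Proof.
rewrite /quadf -mulmxA mxE; apply: eq_bigr => i _; by rewrite mxE.
Qed.

Lemma sqnormDZ v u c : sqnorm (v + c *: u) = sqnorm v + 2 * c * dot u v + c ^+ 2 * sqnorm u.
Proof.
rewrite /sqnorm /dot.
rewrite (eq_bigr (fun i => v i 0 ^+ 2 + (2 * c) * (u i 0 * v i 0) + c ^+ 2 * (u i 0 ^+ 2))).
  by rewrite !big_split /= -!mulr_sumr.
by move=> i _; rewrite !mxE; ring.
Qed.

Lemma Pperp_mul g v : Pperp g *m v = v + (- dot (unitdir g) v) *: unitdir g.
Proof.
rewrite /Pperp mulmxBl mul1mx -mulmxA.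
have -> : (unitdir g)^T *m v = (dot (unitdir g) v)%:M.
  apply/matrixP => i j; rewrite (ord1 i) (ord1 j) !mxE /=.
  by rewrite mulr1n; apply: eq_bigr => k _; rewrite mxE.
by rewrite mul_mx_scalar scaleNr.
Qed.

Lemma norm2_neq0 g : g != 0 -> norm2 g != 0.
Proof.
move=> g0; apply/eqP => h; move/eqP: g0; apply.
by apply: sqnorm_eq0; rewrite -norm2_sqr h expr0n.
Qed.

Lemma norm2_gt0 g : g != 0 -> 0 < norm2 g.
Proof. by move=> g0; rewrite lt0r norm2_neq0 // norm2_ge0. Qed.

Lemma unitdir_sqnorm g : g != 0 -> sqnorm (unitdir g) = 1.
Proof.
move=> g0; rewrite /unitdir (negbTE g0) sqnorm_dot dotZl dotZr -sqnorm_dot -norm2_sqr.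
have N0 := @norm2_neq0 g g0.
by rewrite mulrA -expr2 exprVn mulVf // expf_neq0.
Qed.

Lemma dot_unitdir g v : dot (unitdir g) v = (norm2 g)^-1 * dot g v.
Proof.
rewrite /unitdir; case: eqP => [->|_]; last by rewrite dotZl.
by rewrite dot0l /norm2 /sqnorm big1 ?sqrtr0 ?invr0 ?mul0r // => i _; rewrite mxE expr0n.
Qed.

Lemma dot_ge_norm u r : sqnorm u = 1 -> - norm2 r <= dot u r.
Proof.
move=> u1; have := sqnorm_ge0 (r + norm2 r *: u).
rewrite sqnormDZ u1 mulr1 -norm2_sqr.
have [m0|m0] := eqVneq (norm2 r) 0.
  have r0 : r = 0 by apply: sqnorm_eq0; rewrite -norm2_sqr m0 expr0n.
  by move=> _; rewrite r0 in m0 *; rewrite dot0r m0 oppr0.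
have mp : 0 < norm2 r by rewrite lt0r m0 norm2_ge0.
move=> h; rewrite -subr_ge0 opprK.
have h3 : 0 <= 2 * norm2 r * (norm2 r + dot u r) by nra.
have h2 : 0 < 2 * norm2 r by apply: mulr_gt0.
by move: h3; rewrite pmulr_rge0 // addrC.
Qed.

Lemma sqnorm0 : sqnorm (0 : 'cV[R]_n) = 0.
Proof. by rewrite /sqnorm big1 // => i _; rewrite mxE expr0n. Qed.

Lemma norm20 : norm2 (0 : 'cV[R]_n) = 0.
Proof. by rewrite /norm2 sqnorm0 sqrtr0. Qed.

Lemma unitdir0 : unitdir (0 : 'cV[R]_n) = 0.
Proof. by rewrite /unitdir eqxx. Qed.

Lemma LHS_formula g v : sqnorm (Pperp g *m v) = sqnorm v - dot g v ^+ 2 * (sqnorm g)^-1.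
Proof.
rewrite Pperp_mul sqnormDZ.
have [->|g0] := eqVneq g 0.
  by rewrite unitdir0 !dot0l sqnorm0; ring.
rewrite unitdir_sqnorm // dot_unitdir -(norm2_sqr g).
have N0 := @norm2_neq0 g g0.
field; exact: N0.
Qed.

Lemma key g r (A : 'M[R]_n) (eta lam : R) : 0 < eta -> 0 < lam ->
  lam * sqnorm g <= quadf A g ->
  sqnorm (Pperp g *m (eta *: (A *m g) + r)) <=
  sqnorm (eta *: (A *m g) + r) - eta ^+ 2 * lam ^+ 2 * sqnorm g
    + 2 * eta * lam * (norm2 g * norm2 r).
Proof.
move=> eta0 lam0 hq.
set b := eta *: (A *m g) + r.
rewrite Pperp_mul sqnormDZ.
have [g0|g0] := eqVneq g 0.
  rewrite g0 unitdir0 !dot0l sqnorm0 norm20; lra.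
rewrite unitdir_sqnorm //.
set s := dot (unitdir g) b.
set N := norm2 g.
have Np : 0 < N := @norm2_gt0 g g0.
have e1 : s = eta * (N^-1 * quadf A g) + dot (unitdir g) r.
  by rewrite /s quadfE !dot_unitdir /b dotDr dotZr; ring.
have e2 : eta * lam * N <= eta * (N^-1 * quadf A g).
  rewrite -mulrA; apply: ler_wpM2l; first exact: ltW.
  have -> : lam * N = N^-1 * (lam * sqnorm g).
    rewrite -norm2_sqr -/N; field; exact: lt0r_neq0.
  by apply: ler_wpM2l => //; rewrite invr_ge0 ltW.
have e3 := dot_ge_norm (unitdir g) r (@unitdir_sqnorm g g0).
have m0 := norm2_ge0 r.
rewrite -(norm2_sqr g) -/N.
set a := eta * lam * N.
have a0 : 0 <= a by rewrite /a !mulr_ge0 // ltW.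
have -> : eta ^+ 2 * lam ^+ 2 * N ^+ 2 = a ^+ 2 by rewrite /a; ring.
have -> : 2 * eta * lam * (N * norm2 r) = 2 * a * norm2 r by rewrite /a; ring.
rewrite -/a in e2.
clearbody a s.
have hs : a - norm2 r <= s by lra.
have ss : 0 <= s * s by rewrite -expr2 sqr_ge0.
have [am|am] := lerP (norm2 r) a.
  have h : (a - norm2 r) * (a - norm2 r) <= s * s.
    by apply: ler_pM => //; lra.
  nra.
have h : 0 <= a * (2 * norm2 r - a) by apply: mulr_ge0 => //; lra.
nra.
Qed.
End Alg.
Arguments LHS_formula {R n}.
Arguments key {R n}.
Arguments sqnorm_ge0 {R n}.
Arguments norm2_sqr {R n}.
Arguments norm2_ge0 {R n}.
Arguments dot {R n}.

Lemma amgm {R : realType} {X G E : R} : 0 <= G -> 0 <= E ->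
  (forall k, 0 < k -> X <= k / 2 * G + (2 * k)^-1 * E) ->
  X <= Num.sqrt G * Num.sqrt E.
Proof.
move=> G0 E0 h.
have sp : 0 <= Num.sqrt G * Num.sqrt E by rewrite mulr_ge0 ?sqrtr_ge0.
have [Xn|Xp] := lerP X 0; first exact: le_trans Xn sp.
have [Gz|Gp] := eqVneq G 0; have [Ez|Ep] := eqVneq E 0.
- have := h 1 ltr01; rewrite Gz Ez !mulr0 addr0; lra.
- have Ept : 0 < E by rewrite lt0r Ep.
  have kp : 0 < E / X by rewrite divr_gt0.
  have := h _ kp; rewrite Gz mulr0 add0r.
  have -> : (2 * (E / X))^-1 * E = X / 2.
    by field; rewrite Ep lt0r_neq0.
  lra.
- have Gpt : 0 < G by rewrite lt0r Gp.
  have kp : 0 < X / G by rewrite divr_gt0.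
  have := h _ kp; rewrite Ez mulr0 addr0.
  have -> : X / G / 2 * G = X / 2 by field.
  lra.
- have Gpt : 0 < G by rewrite lt0r Gp.
  have Ept : 0 < E by rewrite lt0r Ep.
  have sG : 0 < Num.sqrt G by rewrite sqrtr_gt0.
  have sE : 0 < Num.sqrt E by rewrite sqrtr_gt0.
  have kp : 0 < Num.sqrt E / Num.sqrt G by rewrite divr_gt0.
  have := h _ kp.
  have eG : G = Num.sqrt G ^+ 2 by rewrite sqr_sqrtr.
  have eE : E = Num.sqrt E ^+ 2 by rewrite sqr_sqrtr.
  move: sG sE; set a := Num.sqrt G; set b := Num.sqrt E => sG sE.
  rewrite {1}eG {1}eE.
  have -> : b / a / 2 * a ^+ 2 + (2 * (b / a))^-1 * b ^+ 2 = a * b.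
    by field; rewrite !lt0r_neq0.
  done.
Qed.

Theorem propositionF1 (R : realType) (dm : measure_display) (T : measurableType dm)
  (P : probability T R) (n : nat)
  (g b r : nat -> T -> 'cV[R]_n) (B : nat -> T -> 'M[R]_n)
  (eta lam : nat -> R) (t : nat) :
  (1 <= t)%N -> 0 < eta t.-1 -> 0 < lam t ->
  (forall i, measurable_fun setT (fun x => g t.-1 x i 0)) ->
  (forall i, measurable_fun setT (fun x => b t x i 0)) ->
  (forall i, measurable_fun setT (fun x => r t x i 0)) ->
  (forall i j, measurable_fun setT (fun x => B t x i j)) ->
  P.-integrable setT (fun x => (sqnorm (g t.-1 x))%:E) ->
  P.-integrable setT (fun x => (sqnorm (b t x))%:E) ->
  P.-integrable setT (fun x => (sqnorm (r t x))%:E) ->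
  (forall x, b t x = eta t.-1 *: (B t x *m g t.-1 x) + r t x) ->
  {ae P, forall x, lam t * sqnorm (g t.-1 x) <= quadf (B t x) (g t.-1 x)} ->
  (Esp P (fun x => sqnorm (Pperp (g t.-1 x) *m b t x))
     <= Esp P (fun x => sqnorm (b t x))
        - ((eta t.-1) ^+ 2 * (lam t) ^+ 2)%:E * Esp P (fun x => sqnorm (g t.-1 x))
        + (2 * eta t.-1 * lam t)%:E
          * Esp P (fun x => (norm2 (g t.-1 x) * norm2 (r t x))%R))%E
  /\
  (forall eps : R, 0 <= eps ->
     (Esp P (fun x => sqnorm (r t x)) <= (eps ^+ 2)%:E)%E ->
     (Esp P (fun x => sqnorm (Pperp (g t.-1 x) *m b t x))
       <= Esp P (fun x => sqnorm (b t x))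
          - ((eta t.-1) ^+ 2 * (lam t) ^+ 2)%:E * Esp P (fun x => sqnorm (g t.-1 x))
          + (2 * eta t.-1 * lam t * eps
             * Num.sqrt (fine (Esp P (fun x => sqnorm (g t.-1 x)))))%:E)%E).
Proof.
move=> t1 eta0 lam0 mg mb mr mB ig ib ir hb hae.
set Gs := fun x => sqnorm (g t.-1 x).
set Bs := fun x => sqnorm (b t x).
set Rs := fun x => sqnorm (r t x).
set GR := fun x => (norm2 (g t.-1 x) * norm2 (r t x))%R.
set L := fun x => sqnorm (Pperp (g t.-1 x) *m b t x).
set e := eta t.-1. set l := lam t.
have mT : measurable [set: T] := measurableT.
have mGs : measurable_fun setT Gs.
  by apply/measurable_realfun.measurable_EFinP; exact: measurable_int ig.
have mBs : measurable_fun setT Bs.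
  by apply/measurable_realfun.measurable_EFinP; exact: measurable_int ib.
have mRs : measurable_fun setT Rs.
  by apply/measurable_realfun.measurable_EFinP; exact: measurable_int ir.
have mGR : measurable_fun setT GR.
  apply: measurable_realfun.measurable_funM.
    exact: (measurableT_comp (measurable_sqrtR R) mGs).
  exact: (measurableT_comp (measurable_sqrtR R) mRs).
have mdot : measurable_fun setT (fun x => dot (g t.-1 x) (b t x)).
  apply: measurable_sum => i.
  exact: measurable_realfun.measurable_funM (mg i) (mb i).
have eL : L = fun x => Bs x - dot (g t.-1 x) (b t x) ^+ 2 * (Gs x)^-1.
  by apply: funext => x; rewrite /L LHS_formula.
have mL : measurable_fun setT L.
  rewrite eL; apply: measurable_realfun.measurable_funB => //.
  apply: measurable_realfun.measurable_funM.
    exact: measurable_realfun.measurable_funX.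
  exact: (measurableT_comp (measurable_invR R) mGs).
set c1 := e ^+ 2 * l ^+ 2. set c2 := 2 * e * l.
set RHS := fun x => Bs x - c1 * Gs x + c2 * GR x.
have mRHS : measurable_fun setT RHS.
  apply: measurable_realfun.measurable_funD.
    apply: measurable_realfun.measurable_funB => //.
    by apply: measurable_realfun.measurable_funM => //; exact: measurable_cst.
  by apply: measurable_realfun.measurable_funM => //; exact: measurable_cst.
have L0 x : 0 <= L x by exact: sqnorm_ge0.
have LB x : L x <= Bs x.
  rewrite eL /=; have : 0 <= dot (g t.-1 x) (b t x) ^+ 2 * (Gs x)^-1.
    by rewrite mulr_ge0 ?sqr_ge0 // invr_ge0 sqnorm_ge0.
  lra.
have GR0 x : 0 <= GR x by rewrite mulr_ge0 // norm2_ge0.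
have GRb x : GR x <= Gs x + Rs x.
  rewrite /GR /Gs /Rs -(norm2_sqr (g t.-1 x)) -(norm2_sqr (r t x)).
  have := norm2_ge0 (g t.-1 x); have := norm2_ge0 (r t x); nra.
have kx x : l * Gs x <= quadf (B t x) (g t.-1 x) -> L x <= RHS x.
  by move=> hx; rewrite /L /RHS /Bs /GR hb; exact: key.
have iGR : P.-integrable setT (fun x => (GR x)%:E).
  apply: (@le_integrable _ _ _ P setT mT (fun x => (GR x)%:E) (fun x => (Gs x)%:E + (Rs x)%:E)%E).
  - exact/measurable_realfun.measurable_EFinP.
  2: exact: (integrableD mT ig ir).
  move=> x _; rewrite abse_EFin (_ : ((Gs x)%:E + (Rs x)%:E)%E = (Gs x + Rs x)%:E) //.
  rewrite abse_EFin lee_fin !ger0_norm //.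
  by rewrite addr_ge0 // sqnorm_ge0.
have iL : P.-integrable setT (fun x => (L x)%:E).
  apply: (@le_integrable _ _ _ P setT mT (fun x => (L x)%:E) (fun x => (Bs x)%:E)).
  - exact/measurable_realfun.measurable_EFinP.
  2: exact: ib.
  by move=> x _; rewrite !abse_EFin lee_fin !ger0_norm // ?sqnorm_ge0.
have eR : (fun x => (RHS x)%:E) = fun x => ((Bs x)%:E - c1%:E * (Gs x)%:E + c2%:E * (GR x)%:E)%E.
  by apply: funext => x; rewrite /RHS EFinD EFinB !EFinM.
have iB1 : P.-integrable setT (fun x => ((Bs x)%:E - c1%:E * (Gs x)%:E)%E).
  exact: (@integrableB _ _ _ P setT mT (fun x => (Bs x)%:E) (fun x => c1%:E * (Gs x)%:E)%E ib (integrableZl mT c1 ig)).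
have iRHS : P.-integrable setT (fun x => (RHS x)%:E).
  by rewrite eR; exact: (@integrableD _ _ _ P setT mT _ (fun x => c2%:E * (GR x)%:E)%E iB1 (integrableZl mT c2 iGR)).
have ERHS : Esp P RHS = (Esp P Bs - c1%:E * Esp P Gs + c2%:E * Esp P GR)%E.
  rewrite /Esp eR integralD //; last exact: integrableZl.
  rewrite (integralB mT ib (integrableZl mT c1 ig)).
  by rewrite integralZl // integralZl.
have P1 : (Esp P L <= Esp P Bs - c1%:E * Esp P Gs + c2%:E * Esp P GR)%E.
  rewrite -ERHS.
  have -> : Esp P RHS = Esp P (RHS \max L).
    apply: ae_eq_integral => //.
    - exact/measurable_realfun.measurable_EFinP.
    - apply/measurable_realfun.measurable_EFinP.
      exact: measurable_realfun.measurable_maxr.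
    - apply: filterS hae => x hx _ /=.
      by rewrite max_l // kx.
  apply: ge0_le_integral => //.
  - by move=> x _; rewrite lee_fin.
  - exact/measurable_realfun.measurable_EFinP.
  - apply/measurable_realfun.measurable_EFinP.
    exact: measurable_realfun.measurable_maxr.
  - by move=> x _; rewrite lee_fin /= le_max lexx orbT.
split; first exact: P1.
move=> eps eps0 hR.
have fin f : P.-integrable setT (fun x => (f x)%:E) -> Esp P f = (fine (Esp P f))%:E.
  by move=> hf; rewrite fineK //; exact: integrable_fin_num.
have pos f : (forall x, 0 <= f x) -> 0 <= fine (Esp P f).
  by move=> hf; apply: fine_ge0; apply: integral_ge0 => x _; rewrite lee_fin.
have EG0 : 0 <= fine (Esp P Gs) by apply: pos => x; exact: sqnorm_ge0.
have ER0 : 0 <= fine (Esp P Rs) by apply: pos => x; exact: sqnorm_ge0.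
have hk k : 0 < k -> fine (Esp P GR) <= k / 2 * fine (Esp P Gs) + (2 * k)^-1 * fine (Esp P Rs).
  move=> kp.
  have i1 := integrableZl mT (k / 2) ig.
  have i2 := integrableZl mT ((2 * k)^-1) ir.
  have i12 := integrableD mT i1 i2.
  have : (Esp P GR <= \int[P]_x ((k / 2)%:E * (Gs x)%:E + ((2 * k)^-1)%:E * (Rs x)%:E))%E.
    apply: le_integral => // x _.
    rewrite -!EFinM -EFinD lee_fin /GR /Gs /Rs -(norm2_sqr (g t.-1 x)) -(norm2_sqr (r t x)).
    set N := norm2 (g t.-1 x); set m := norm2 (r t x).
    have -> : k / 2 * N ^+ 2 + (2 * k)^-1 * m ^+ 2 = N * m + (k * N - m) ^+ 2 / (2 * k).
      by field; rewrite lt0r_neq0.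
    rewrite lerDl; apply: divr_ge0; first exact: sqr_ge0.
    by rewrite mulr_ge0 // ltW.
  rewrite integralD // integralZl // integralZl //.
  move=> H; rewrite (fin _ iGR) in H.
  rewrite -[(\int[P]_x (Gs x)%:E)%E]/(Esp P Gs) -[(\int[P]_x (Rs x)%:E)%E]/(Esp P Rs) in H.
  by rewrite (fin _ ig) (fin _ ir) -!EFinM -EFinD lee_fin in H.
have hGR := amgm EG0 ER0 hk.
move: hR; rewrite (fin _ ir) lee_fin => hR.
have sR : Num.sqrt (fine (Esp P Rs)) <= eps.
  by rewrite -(ger0_norm eps0) -sqrtr_sqr ler_wsqrtr.
move: P1; rewrite (fin _ iL) (fin _ ib) (fin _ ig) (fin _ iGR).
rewrite -!EFinM -EFinB -!EFinD !lee_fin => P1.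
have sG := sqrtr_ge0 (fine (Esp P Gs)).
have c20 : 0 <= c2 by rewrite /c2 !mulr_ge0 // ltW.
have h3 : fine (Esp P GR) <= eps * Num.sqrt (fine (Esp P Gs)).
  apply: (le_trans hGR); rewrite mulrC; exact: ler_wpM2r.
have h4 : c2 * fine (Esp P GR) <= c2 * eps * Num.sqrt (fine (Esp P Gs)).
  by rewrite -mulrA; exact: ler_wpM2l.
lra.
Qed.
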